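(* For every initial state $x(0)\in\mathbb O^n$, the trajectory $x(t)$ of the PID opinion dynamics almost surely reaches an equilibrium in finite time.
   Context: Let $n\ge 1$, $\mathcal V=\{1,\dots,n\}$, and let $W=(w_{ij})$ be an $n\times n$ row-stochastic matrix (nonnegative entries, each row summing to $1$). The opinion set is a finite set of consecutive integers $\mathbb O=\{k,k+1,\dots,k+s\}$, and $\theta\in\mathbb O$ is a fixed ''truth''. For $x\in\mathbb O^n$, $i\in\mathcal V$, $z\in\mathbb O$, define $C^i_{\mathrm{social}}(z;x)=\sum_{j=1}^n w_{ij}|z-x_j|$ and $C^i_{\mathrm{cog}}(z)=|z-\theta|$, and the Pareto-improvement set $P_i(x)=\{z\in\mathbb O: C^i_{\mathrm{social}}(z;x)\le C^i_{\mathrm{social}}(x_i;x),\ |z-\theta|\le |x_i-\theta|\}$. PID opinion dynamics: starting from $x(0)$, at each time $t+1$ a node $i$ is chosen uniformly at random from $\mathcal V$ (independently over time) and sets $x_i(t+1)$ to an element chosen at random from $P_i(x(t))$, each element of $P_i(x(t))$ having positive probability; all other nodes keep their opinions. An equilibrium is a state $x^*$ with $P_i(x^* )=\{x^*_i\}$ for all $i\in\mathcal V$. *)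

(* Defs.v *)
From HB Require Import structures.
From mathcomp Require Import all_boot all_order all_algebra.
From mathcomp Require Import all_classical all_reals all_analysis.
Set Implicit Arguments. Unset Strict Implicit. Unset Printing Implicit Defensive.
Import Order.TTheory GRing.Theory Num.Theory.
Local Open Scope ring_scope.

(* Opinion set O = {k, k+1, ..., k+s}: an opinion is encoded by its offset
   o : 'I_(s.+1), whose integer value is k + o. *)
Definition opin (k : int) (s : nat) (o : 'I_s.+1) : int := k + (o : nat)%:Z.

Definition state (n s : nat) := {ffun 'I_n -> 'I_s.+1}.

Definition row_stochastic (R : realType) (n : nat) (W : 'M[R]_n) : Prop :=
  (forall i j, 0 <= W i j) /\ (forall i, \sum_(j < n) W i j = 1).

Definition Csocial (R : realType) (n s : nat) (k : int) (W : 'M[R]_n)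
    (i : 'I_n) (z : 'I_s.+1) (x : state n s) : R :=
  \sum_(j < n) W i j * `|(opin k z)%:~R - (opin k (x j))%:~R|.

Definition Ccog (k : int) (s : nat) (theta z : 'I_s.+1) : int :=
  `|opin k z - opin k theta|.

Definition Pset (R : realType) (n s : nat) (k : int) (W : 'M[R]_n)
    (theta : 'I_s.+1) (x : state n s) (i : 'I_n) : {set 'I_s.+1} :=
  [set z | (Csocial k W i z x <= Csocial k W i (x i) x)
           && (Ccog k theta z <= Ccog k theta (x i))].

Definition equilibrium (R : realType) (n s : nat) (k : int) (W : 'M[R]_n)
    (theta : 'I_s.+1) (x : state n s) : Prop :=
  forall i : 'I_n, Pset k W theta x i = [set x i].

Definition upd (n s : nat) (x : state n s) (i : 'I_n) (z : 'I_s.+1) : state n s :=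
  [ffun j => if j == i then z else x j].

(* q i x z = probability that node i, when chosen in state x, adopts z.
   Valid iff it is a probability distribution on P_i(x) giving positive
   probability to every element of P_i(x). *)
Definition valid_choice (R : realType) (n s : nat) (k : int) (W : 'M[R]_n)
    (theta : 'I_s.+1) (q : 'I_n -> state n s -> 'I_s.+1 -> R) : Prop :=
  (forall i x z, z \in Pset k W theta x i -> 0 < q i x z) /\
  (forall i x z, z \notin Pset k W theta x i -> q i x z = 0) /\
  (forall i x, \sum_(z < s.+1) q i x z = 1).

(* One-step transition probability of PID dynamics: node i chosen uniformly,
   then z drawn from q i x. *)
Definition PID_kernel (R : realType) (n s : nat)
    (q : 'I_n -> state n s -> 'I_s.+1 -> R) (x y : state n s) : R :=
  \sum_(i < n) (n%:R)^-1 * \sum_(z < s.+1) (if y == upd x i z then q i x z else 0).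

(* X is (a realisation of) the PID Markov chain started at x0 on the
   probability space (T, P): each event {X t = y} is measurable and the
   finite-dimensional distributions are those of the chain. *)
Definition is_PID_process (R : realType) (d : measure_display)
    (T : measurableType d) (P : probability T R) (n s : nat)
    (q : 'I_n -> state n s -> 'I_s.+1 -> R) (x0 : state n s)
    (X : nat -> T -> state n s) : Prop :=
  (forall t y, measurable (X t @^-1` [set y])%classic) /\
  (forall (t : nat) (path : nat -> state n s),
     P [set w | forall m, (m <= t)%N -> X m w = path m]%classic =
     (((path 0%N == x0)%:R * \prod_(m < t) PID_kernel q (path m) (path m.+1)) : R)%:E).

(* Main.v *)
Require Import Defs.
From HB Require Import structures.
From mathcomp Require Import all_boot all_order all_algebra.
From mathcomp Require Import all_classical all_reals all_analysis.
From mathcomp Require Import ring lra zify.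
Import Order.TTheory GRing.Theory Num.Theory.
Local Open Scope ring_scope.
Lemma geo0 (R : realType) (l C r : R) : 0 <= l -> l < 1 -> 0 <= r ->
  (forall t, r <= l ^+ t * C) -> r <= 0.
Proof.
move=> l0 l1 r0 H.
set c := 1 - l.
have c0 : 0 < c by rewrite subr_gt0.
have bern t : 1 + t%:R * c <= (1 + c) ^+ t.
  elim: t => [|t IH]; first by rewrite mul0r addr0 expr0.
  have h1 : (1 + t%:R*c)*(1+c) <= (1+c)^+t * (1+c).
    by rewrite ler_wpM2r // addr_ge0 // ltW.
  have ht : 0 <= t%:R :> R by [].
  rewrite exprSr -natr1; nra.
have le1 t : l ^+ t * (1 + c) ^+ t <= 1.
  rewrite -exprMn; apply: exprn_ile1.
    by rewrite mulr_ge0 // addr_ge0 // ltW.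
  rewrite /c; nra.
have C0 : 0 <= C by have := H 0%N; rewrite expr0 mul1r; lra.
have key t : r * (1 + t%:R * c) <= C.
  have h1 := H t.
  have h2 := bern t.
  have h3 := le1 t.
  have ht : 0 <= t%:R :> R by [].
  have h4 : 0 <= l ^+ t by rewrite exprn_ge0.
  have h5 : r * (1 + t%:R * c) <= l ^+ t * C * (1 + t%:R * c).
    by rewrite ler_wpM2r // addr_ge0 // mulr_ge0 // ltW.
  have h6 : l ^+ t * C * (1 + t%:R * c) <= l ^+ t * C * (1 + c) ^+ t.
    by rewrite ler_wpM2l // mulr_ge0.
  have h7 : l ^+ t * C * (1 + c) ^+ t <= C.
    rewrite mulrAC; rewrite -[leRHS]mul1r ler_wpM2r //.
  lra.
rewrite leNgt; apply/negP => rpos.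
have := archi_boundP (x := C / (r * c)) (divr_ge0 C0 (mulr_ge0 r0 (ltW c0))).
set t := Num.Def.archi_bound _ => ht.
have := key t.
rewrite ltr_pdivrMr ?mulr_gt0 // in ht.
nra.
Qed.

Section Meas.
Variables (R : realType) (d : measure_display) (T : measurableType d) (P : probability T R).

Lemma bigU_mem (I : eqType) (r : seq I) (F : pred I) (A : I -> set T) w :
  (\big[setU/set0]_(i <- r | F i) A i) w <-> exists i, [/\ i \in r, F i & A i w].
Proof.
elim: r => [|a r IH]; rewrite ?big_nil ?big_cons.
  by split=> // -[i []].
case: ifP => Fa.
  split.
    case=> [Aw|/IH [i [ir Fi Ai]]]; first by exists a; rewrite inE eqxx.
    by exists i; rewrite inE ir orbT.
  move=> [i []]; rewrite inE => /orP [/eqP ->|ir] Fi Ai; first by left.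
  by right; apply/IH; exists i.
split; first by move=> /IH [i [ir Fi Ai]]; exists i; rewrite inE ir orbT.
move=> [i []]; rewrite inE => /orP [/eqP ->|ir] Fi Ai; first by rewrite Fa in Fi.
by apply/IH; exists i.
Qed.

Lemma bigI_mem (I : eqType) (r : seq I) (F : pred I) (A : I -> set T) w :
  (\big[setI/setT]_(i <- r | F i) A i) w <-> forall i, i \in r -> F i -> A i w.
Proof.
elim: r => [|a r IH]; rewrite ?big_nil ?big_cons.
  by split=> //.
case: ifP => Fa.
  split.
    case=> Aw /IH H i; rewrite inE => /orP [/eqP ->|ir] //; exact: H.
  move=> H; split; first by apply: H; rewrite ?inE ?eqxx.
  by apply/IH => i ir; apply: H; rewrite inE ir orbT.
split; first by move=> /IH H i; rewrite inE => /orP [/eqP ->|ir]; [rewrite Fa|apply: H].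
by move=> H; apply/IH => i ir; apply: H; rewrite inE ir orbT.
Qed.

Lemma addU_seq (I : eqType) (r : seq I) (F : pred I) (A : I -> set T) :
  uniq r ->
  (forall i, measurable (A i)) -> (forall i j, i != j -> A i `&` A j = set0)%classic ->
  P (\big[setU/set0]_(i <- r | F i) A i) = \sum_(i <- r | F i) P (A i).
Proof.
move=> + mA dA; elim: r => [|a r IH] /=; first by rewrite !big_nil measure0.
move=> /andP [ar ur]; rewrite !big_cons.
case: ifP => Fa; last exact: IH.
rewrite measureU //.
- by congr (_ + _)%E; apply: IH.
- by apply: bigsetU_measurable.
- rewrite predeqE => w; split => //; case=> Aw /bigU_mem [i [ir Fi Ai]].
  have ai : a != i by apply: contraNneq ar => ->.
  by have := dA _ _ ai; rewrite predeqE => /(_ w) [/(_ (conj Aw Ai))].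
Qed.

Lemma addU (I : finType) (F : pred I) (A : I -> set T) :
  (forall i, measurable (A i)) -> (forall i j, i != j -> A i `&` A j = set0)%classic ->
  P (\big[setU/set0]_(i | F i) A i) = \sum_(i | F i) P (A i).
Proof. by move=> mA dA; apply: addU_seq => //; exact: index_enum_uniq. Qed.
End Meas.

Set Implicit Arguments. Unset Strict Implicit. Unset Printing Implicit Defensive.

Section PID.
Variables (R : realType) (n s : nat) (k : int) (W : 'M[R]_n)
    (theta : 'I_s.+1) (q : 'I_n -> state n s -> 'I_s.+1 -> R)
    (d : measure_display) (T : measurableType d) (P : probability T R)
    (x0 : state n s) (X : nat -> T -> state n s).
Hypotheses (n0 : (0 < n)%N) (HW : row_stochastic W)
  (Hq : valid_choice k W theta q) (HX : is_PID_process P q x0 X).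

Local Notation S := (state n s).
Local Notation K := (PID_kernel q).

Definition pre t w : {ffun 'I_t.+1 -> S} := [ffun i : 'I_t.+1 => X i w].
Definition pathf t (f : {ffun 'I_t.+1 -> S}) : nat -> S := fun m => f (inord m).
Definition wt t (g : nat -> S) : R :=
  (g 0%N == x0)%:R * \prod_(m < t) K (g m) (g m.+1).
Definition Ev t (F : pred {ffun 'I_t.+1 -> S}) : set T := [set w | F (pre t w)].

Lemma mX t y : measurable (X t @^-1` [set y])%classic.
Proof. exact: HX.1. Qed.

Lemma Bset_eq t f : [set w | pre t w = f]%classic =
   [set w | forall m, (m <= t)%N -> X m w = pathf f m]%classic.
Proof.
rewrite predeqE => w; split.
  by move=> <- m mt; rewrite /pathf ffunE inordK.
move=> H; apply/ffunP => i; rewrite ffunE H ?(leq_ord i) //.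
by rewrite /pathf inord_val.
Qed.

Lemma mB t f : measurable [set w | pre t w = f]%classic.
Proof.
have -> : [set w | pre t w = f]%classic =
   \big[setI/setT]_(i < t.+1) (X i @^-1` [set f i])%classic.
  rewrite predeqE => w; rewrite bigI_mem; split.
    by move=> <- i _ _; rewrite /= ffunE.
  by move=> H; apply/ffunP => i; rewrite ffunE; apply: H.
by apply: bigsetI_measurable => i _; apply: mX.
Qed.

Lemma PB t f : P [set w | pre t w = f]%classic = (wt t (pathf f))%:E.
Proof. by rewrite Bset_eq HX.2. Qed.

Lemma Ev_eq t F : Ev F = \big[setU/set0]_(f | F f) [set w | pre t w = f]%classic.
Proof.
rewrite predeqE => w; rewrite bigU_mem; split.
  by move=> Fw; exists (pre t w); split => //; rewrite mem_index_enum.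
by case=> f [_ Ff Hf]; rewrite /Ev /= Hf.
Qed.

Lemma mEv t F : measurable (@Ev t F).
Proof. by rewrite Ev_eq; apply: bigsetU_measurable => f _; apply: mB. Qed.

Lemma disjB t (f g : {ffun 'I_t.+1 -> S}) : f != g ->
  ([set w | pre t w = f] `&` [set w | pre t w = g] = set0)%classic.
Proof.
move=> fg; rewrite predeqE => w; split => //; case=> /= -> /eqP.
by rewrite (negbTE fg).
Qed.

Lemma PEv t F : P (@Ev t F) = (\sum_(f | F f) wt t (pathf f))%:E.
Proof.
rewrite Ev_eq addU; last 2 first.
- by move=> f; apply: mB.
- by move=> f g; apply: disjB.
by rewrite -sumEFin; apply: eq_bigr => f _; rewrite PB.
Qed.

Lemma PEv2 t F y : P (@Ev t F `&` X t.+1 @^-1` [set y])%classic =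
  (\sum_(f | F f) wt t (pathf f) * K (f ord_max) y)%:E.
Proof.
have -> : (@Ev t F `&` X t.+1 @^-1` [set y])%classic =
   \big[setU/set0]_(f | F f) ([set w | pre t w = f] `&` X t.+1 @^-1` [set y])%classic.
  rewrite predeqE => w; rewrite bigU_mem; split.
    by case=> Fw Xw; exists (pre t w); split => //; rewrite mem_index_enum.
  by case=> f [_ Ff [/= Hf Xw]]; split => //; rewrite /Ev /= Hf.
rewrite addU; last 2 first.
- by move=> f; apply: measurableI; [apply: mB | apply: mX].
- move=> f g fg; rewrite predeqE => w; split => //; case=> -[/= -> _] [/eqP].
  by rewrite (negbTE fg).
rewrite -sumEFin; apply: eq_bigr => f _.
pose g m := if (m <= t)%N then pathf f m else y.
have -> : ([set w | pre t w = f] `&` X t.+1 @^-1` [set y])%classic =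
   [set w | forall m, (m <= t.+1)%N -> X m w = g m]%classic.
  rewrite Bset_eq predeqE => w; split.
    case=> H Xw m; rewrite leq_eqVlt => /orP [/eqP ->|mt].
      by rewrite /g ltnn.
    by rewrite /g -ltnS mt H.
  move=> H; split; last by rewrite /= H // /g ltnn.
  by move=> m mt; rewrite H ?(leq_trans mt) // /g mt.
rewrite HX.2; congr (_%:E).
rewrite /wt big_ord_recr /= mulrA; congr (_ * _ * _).
- by apply: eq_bigr => i _; rewrite /g ltnW // ltn_ord.
- rewrite /g leqnn ltnn /pathf; congr (K (f _) y).
  by apply: val_inj; rewrite /= inordK.
Qed.

End PID.

Section Drift.
Variables (R : realType) (n s : nat) (k : int) (W : 'M[R]_n)
    (theta : 'I_s.+1) (q : 'I_n -> state n s -> 'I_s.+1 -> R).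
Hypotheses (n0 : (0 < n)%N) (HW : row_stochastic W)
  (Hq : valid_choice k W theta q).

Local Notation S := (state n s).
Local Notation K := (PID_kernel q).
Local Notation PS := (Pset k W theta).

Definition eqb (x : S) : bool := [forall i, PS x i == [set x i]].

Lemma eqbP x : reflect (equilibrium k W theta x) (eqb x).
Proof.
by apply: (iffP forallP) => H i; [apply/eqP; exact: H | apply/eqP; exact: H].
Qed.

Definition cc (z : 'I_s.+1) : nat := absz (opin k z - opin k theta).
Definition Phi (x : S) : nat := (\sum_(i < n) cc (x i))%N.
Definition V x : R := 2%:R ^+ Phi x.

Lemma opin_inj : injective (@opin k s).
Proof. move=> a b; rewrite /opin => h; apply: val_inj => /=; lia. Qed.

Lemma in_P_refl (x : S) (i : 'I_n) : x i \in PS x i.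
Proof. by rewrite inE !lexx. Qed.

Lemma cc_le (x : S) i z : z \in PS x i -> (cc z <= cc (x i))%N.
Proof. by rewrite inE => /andP [_]; rewrite /Ccog /cc; lia. Qed.

Lemma Phi_upd (x : S) i z : (Phi (upd x i z) + cc (x i) = Phi x + cc z)%N.
Proof.
rewrite /Phi (bigD1 i) //= [in RHS](bigD1 i) //= ffunE eqxx.
rewrite [X in (_ + X + _)%N](eq_bigr (fun j => cc (x j))); last first.
  by move=> j /negbTE ji; rewrite ffunE ji.
by rewrite (addnC (cc z)) addnAC (addnC (cc (x i))).
Qed.

Lemma ex_dec x : ~~ eqb x -> exists i z, z \in PS x i /\ (cc z < cc (x i))%N.
Proof.
rewrite negb_forall => /existsP [i hi].
have [z [zP zne]] : exists z, z \in PS x i /\ z != x i.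
  case: (pselect (exists z, z \in PS x i /\ z != x i)) => // h.
  exfalso; move/negP: hi; apply; apply/eqP/setP => z; rewrite finset.in_set1.
  apply/idP/idP; last by move/eqP ->; exact: in_P_refl.
  move=> zP; apply/negPn/negP => ne; apply: h; by exists z.
case: (ltnP (cc z) (cc (x i))) => [lt|ge]; first by exists i, z.
have eqc : cc z = cc (x i) by apply/eqP; rewrite eqn_leq ge cc_le.
have AB : opin k z != opin k (x i) by apply: contra zne => /eqP/opin_inj ->.
exists i, theta; split; last first.
  move: eqc AB; rewrite /cc subrr /=; lia.
rewrite inE; apply/andP; split; last by rewrite /Ccog subrr normr0.
move: zP; rewrite inE => /andP [zs _].
set A := opin k (x i) in AB eqc *; set B := opin k z in AB eqc *.
set Th := opin k theta in eqc *.
have hj j : `|Th%:~R - (opin k (x j))%:~R| + `|Th%:~R - (opin k (x j))%:~R|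
    <= `|A%:~R - (opin k (x j))%:~R| + `|B%:~R - (opin k (x j))%:~R| :> R.
  have e : (Th + Th = A + B)%R by move: eqc AB; rewrite /cc -/Th -/A -/B; lia.
  have e' : (Th%:~R + Th%:~R = A%:~R + B%:~R :> R) by rewrite -!rmorphD e.
  rewrite -mulr2n -normrMn mulr2n.
  set Y := (opin k (x j))%:~R.
  have -> : Th%:~R - Y + (Th%:~R - Y) = (A%:~R - Y) + (B%:~R - Y) :> R by lra.
  exact: ler_normD.
have : Csocial k W i theta x + Csocial k W i theta x <=
    Csocial k W i (x i) x + Csocial k W i z x.
  rewrite /Csocial -!big_split /=; apply: ler_sum => j _.
  rewrite -!mulrDr; apply: ler_wpM2l; first by case: HW.
  exact: hj.
move: zs; rewrite -/A -/B; lra.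
Qed.

Lemma q_ge0 i (x : S) z : 0 <= q i x z.
Proof.
case: (boolP (z \in PS x i)) => h; first exact: ltW (Hq.1 _ _ _ h).
by rewrite Hq.2.1.
Qed.

Lemma sum_ge_term (I : finType) (F : I -> R) j :
  (forall i, 0 <= F i) -> F j <= \sum_i F i.
Proof.
move=> h; rewrite (bigD1 j) //= lerDl; apply: sumr_ge0 => i _; exact: h.
Qed.

Lemma q_le1 i (x : S) z : q i x z <= 1.
Proof. by rewrite -(Hq.2.2 i x); apply: sum_ge_term => z'; apply: q_ge0. Qed.

Lemma K_ge0 (x y : S) : 0 <= K x y.
Proof.
apply: sumr_ge0 => i _; apply: mulr_ge0; first by rewrite invr_ge0.
by apply: sumr_ge0 => z _; case: ifP => _ //; apply: q_ge0.
Qed.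

Lemma KV (x : S) (f : S -> R) :
  \sum_y K x y * f y = \sum_i n%:R^-1 * \sum_z q i x z * f (upd x i z).
Proof.
rewrite /PID_kernel.
under eq_bigr do rewrite mulr_suml.
rewrite exchange_big; apply: eq_bigr => i _.
under eq_bigr do rewrite -mulrA mulr_suml.
rewrite -mulr_sumr; congr (_ * _).
rewrite exchange_big; apply: eq_bigr => z _.
rewrite (bigD1 (upd x i z)) //= eqxx big1 ?addr0 // => y /negbTE ->.
by rewrite mul0r.
Qed.

Lemma ex_pmin : exists p, [/\ 0 < p, p <= 1 &
  forall i x z, z \in PS x i -> p <= q i x z].
Proof.
pose i00 : 'I_n := Ordinal n0.
pose y0 : S := [ffun => ord0].
pose t0 : ('I_n * S * 'I_s.+1)%type := (i00, y0, y0 i00).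
pose Pr := [pred t : ('I_n * S * 'I_s.+1)%type | t.2 \in PS t.1.2 t.1.1].
pose F (t : ('I_n * S * 'I_s.+1)%type) := q t.1.1 t.1.2 t.2.
have h0 : Pr t0 by rewrite /Pr /= in_P_refl.
case: (@arg_minP _ _ _ t0 Pr F h0) => t Pt Hmin.
exists (F t); split.
- exact: Hq.1 _ _ _ Pt.
- exact: q_le1.
- by move=> i x z h; apply: (Hmin (i, x, z)).
Qed.

Lemma V_ge1 (x : S) : 1 <= V x.
Proof. by rewrite /V exprn_ege1 // ler1n. Qed.

Lemma V_le (y x : S) : (Phi y <= Phi x)%N -> V y <= V x.
Proof. by move=> h; apply: ler_weXn2l => //; rewrite ler1n. Qed.

Lemma V_lt (y x : S) : (Phi y < Phi x)%N -> V y + V y <= V x.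
Proof.
move=> h; have := V_le (y:=y) (x:=x); rewrite /V.
have -> : (2%:R : R) ^+ Phi y + 2%:R ^+ Phi y = 2%:R ^+ (Phi y).+1.
  by rewrite exprS mulr_natl mulr2n.
by move=> _; apply: ler_weXn2l => //; rewrite ler1n.
Qed.

Lemma drift p : 0 < p -> (forall i x z, z \in PS x i -> p <= q i x z) ->
  forall x, ~~ eqb x ->
  \sum_y K x y * V y <= (1 - p / (2 * n%:R)) * V x.
Proof.
move=> p0 hp x nx; rewrite KV.
have [i0 [z0 [Pz0 lt0]]] := ex_dec nx.
have Nn : 0 < n%:R :> R by rewrite ltr0n.
pose D i z := q i x z * V x - q i x z * V (upd x i z).
have D0 i z : 0 <= D i z.
  rewrite subr_ge0; case: (boolP (z \in PS x i)) => h; last by rewrite (Hq.2.1 _ _ _ h) !mul0r.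
  apply: ler_wpM2l; first exact: q_ge0.
  apply: V_le; have := Phi_upd x i z; have := cc_le h; lia.
have Dz0 : p * V x <= D i0 z0 + D i0 z0.
  have hv := V_lt (y := upd x i0 z0) (x := x).
  have hv' : V (upd x i0 z0) + V (upd x i0 z0) <= V x.
    by apply: hv; have := Phi_upd x i0 z0; lia.
  have hq := hp _ _ _ Pz0; have hq0 := q_ge0 i0 x z0.
  have Vx := V_ge1 x.
  rewrite /D; nra.
have sumD : D i0 z0 <= \sum_i \sum_z D i z.
  apply: le_trans (sum_ge_term _ _); last by move=> i; apply: sumr_ge0 => z _.
  exact: sum_ge_term.
have sumH : \sum_i \sum_z q i x z * V (upd x i z) =
    n%:R * V x - \sum_i \sum_z D i z.
  have -> : n%:R * V x = \sum_(i < n) V x by rewrite sumr_const card_ord mulr_natl.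
  rewrite -sumrB; apply: eq_bigr => i _.
  rewrite [X in _ = X - _](_ : _ = \sum_z q i x z * V x); last by rewrite -mulr_suml Hq.2.2 mul1r.
  rewrite -sumrB; apply: eq_bigr => z _.
  by rewrite /D opprB addrCA subrr addr0.
rewrite -mulr_sumr sumH.
have -> : (1 - p / (2 * n%:R)) * V x = n%:R^-1 * (n%:R * V x - p * V x / 2).
  by field; rewrite lt0r_neq0.
rewrite ler_wpM2l ?invr_ge0 ?ler0n //.
rewrite lerD2l lerN2; lra.
Qed.

End Drift.

Section Main.
Variables (R : realType) (n s : nat) (k : int) (W : 'M[R]_n)
    (theta : 'I_s.+1) (q : 'I_n -> state n s -> 'I_s.+1 -> R)
    (d : measure_display) (T : measurableType d) (P : probability T R)
    (x0 : state n s) (X : nat -> T -> state n s).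
Hypotheses (n0 : (0 < n)%N) (HW : row_stochastic W)
  (Hq : valid_choice k W theta q) (HX : is_PID_process P q x0 X).

Local Notation S := (state n s).
Local Notation K := (PID_kernel q).
Local Notation eqb' := (eqb k W theta).
Local Notation V' := (V R k theta).

Definition NE t (f : {ffun 'I_t.+1 -> S}) : bool := [forall i, ~~ eqb' (f i)].
Definition a t (x : S) : R :=
  \sum_(f : {ffun 'I_t.+1 -> S} | NE f && (f ord_max == x)) wt q x0 t (pathf f).
Definition Stot t := \sum_(x : S) a t x * V' x.

Lemma wt_ge0 t g : 0 <= wt q x0 t g.
Proof.
apply: mulr_ge0; first exact: ler0n.
by apply: prodr_ge0 => m _; apply: K_ge0 Hq _ _.
Qed.

Lemma a_ge0 t x : 0 <= a t x.
Proof. by apply: sumr_ge0 => f _; apply: wt_ge0. Qed.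

Lemma a_eq t x : eqb' x -> a t x = 0.
Proof.
move=> hx; apply: big1 => f /andP [/forallP h /eqP e].
by have := h ord_max; rewrite e hx.
Qed.

Lemma a_rec t y : a t.+1 y <= \sum_x a t x * K x y.
Proof.
case: (boolP (eqb' y)) => hy.
  rewrite a_eq //; apply: sumr_ge0 => x _; apply: mulr_ge0; first exact: a_ge0.
  exact: K_ge0 Hq _ _.
have e2 : Ev X (fun f : {ffun 'I_t.+2 -> S} => NE f && (f ord_max == y)) =
    (Ev X (@NE t) `&` X t.+1 @^-1` [set y])%classic.
  rewrite predeqE => w; rewrite /Ev /=; split.
    move=> /andP [/forallP h /eqP hy']; split.
      apply/forallP => i; have := h (widen_ord (leqnSn _) i).
      by rewrite !ffunE.
    by rewrite ffunE in hy'.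
  case=> /forallP h hX; apply/andP; split; last by rewrite ffunE hX.
  apply/forallP => i; rewrite ffunE.
  case: (ltnP i t.+1) => hi.
    by have := h (Ordinal hi); rewrite ffunE.
  have -> : nat_of_ord i = t.+1 by have := ltn_ord i; lia.
  by rewrite hX.
have e3 : \sum_x a t x * K x y =
    \sum_(f : {ffun 'I_t.+1 -> S} | NE f) wt q x0 t (pathf f) * K (f ord_max) y.
  rewrite [RHS](partition_big (fun f : {ffun 'I_t.+1 -> S} => f ord_max) predT) //=.
  apply: eq_bigr => x _; rewrite /a mulr_suml.
  by apply: eq_bigr => f /andP [_ /eqP ->].
have : (a t.+1 y)%:E = (\sum_x a t x * K x y)%:E.
  by rewrite e3 -(PEv2 HX) -e2 (PEv HX).
by move=> h; rewrite (EFin_inj h).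
Qed.

Variable p : R.
Hypotheses (p0 : 0 < p) (p1 : p <= 1)
  (hp : forall i x z, z \in Pset k W theta x i -> p <= q i x z).

Let c := p / (2 * n%:R).

Lemma c_range : 0 < c /\ c <= 1.
Proof.
have Nn : 1 <= n%:R :> R by rewrite ler1n.
split; first by rewrite /c divr_gt0 // mulr_gt0 // ltr0n.
rewrite /c ler_pdivrMr ?mulr_gt0 ?ltr0n //; have := p1; lra.
Qed.

Lemma Stot_rec t : Stot t.+1 <= (1 - c) * Stot t.
Proof.
rewrite /Stot.
apply: (@le_trans _ _ (\sum_y (\sum_x a t x * K x y) * V' y)).
  apply: ler_sum => y _; apply: ler_wpM2r; last exact: a_rec.
  exact: (le_trans ler01 (V_ge1 R k theta y)).
under eq_bigr do rewrite mulr_suml.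
rewrite exchange_big /= mulr_sumr; apply: ler_sum => x _.
case: (boolP (eqb' x)) => hx.
  by rewrite a_eq // mul0r mulr0 big1 // => y _; rewrite !mul0r.
under eq_bigr do rewrite -mulrA.
rewrite -mulr_sumr mulrCA; apply: ler_wpM2l; first exact: a_ge0.
exact: drift n0 HW Hq _ p0 hp _ hx.
Qed.

Lemma Stot_bound t : Stot t <= (1 - c) ^+ t * Stot 0.
Proof.
have [_ c1] := c_range.
elim: t => [|t IH]; first by rewrite expr0 mul1r.
apply: le_trans (Stot_rec t) _.
rewrite exprS -mulrA; apply: ler_wpM2l; last exact: IH.
by rewrite subr_ge0.
Qed.

Lemma PN t : P (Ev X (@NE t)) = (\sum_x a t x)%:E.
Proof.
rewrite (PEv HX); congr EFin.
by rewrite (partition_big (fun f : {ffun 'I_t.+1 -> S} => f ord_max) predT).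
Qed.

Lemma PN_le t : \sum_x a t x <= Stot t.
Proof.
apply: ler_sum => x _; apply: ler_peMr; first exact: a_ge0.
exact: V_ge1.
Qed.

End Main.

Unset Implicit Arguments.

Theorem theorem2 (R : realType) (n s : nat) (k : int) (W : 'M[R]_n)
    (theta : 'I_s.+1) (q : 'I_n -> state n s -> 'I_s.+1 -> R)
    (d : measure_display) (T : measurableType d) (P : probability T R)
    (x0 : state n s) (X : nat -> T -> state n s) :
  (0 < n)%N ->
  row_stochastic W ->
  valid_choice k W theta q ->
  is_PID_process P q x0 X ->
  P [set w | exists t : nat, equilibrium k W theta (X t w)]%classic = 1%E.
Proof.
move=> n0 HW Hq HX.
have [p [p0 p1 hp]] := ex_pmin n0 Hq.
have [c0 c1] := c_range n0 p0 p1.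
set c := p / (2 * n%:R) in c0 c1.
set G := [set w | exists t : nat, equilibrium k W theta (X t w)]%classic.
have mG : measurable G.
  have -> : G = (\bigcup_t Ev X (fun f : {ffun 'I_t.+1 -> state n s} =>
                   eqb k W theta (f ord_max)))%classic.
    rewrite predeqE => w; split.
      by case=> t /eqbP h; exists t => //; rewrite /Ev /= ffunE.
    by case=> t _; rewrite /Ev /= ffunE => /eqbP h; exists t.
  by apply: bigcupT_measurable => t; apply: (mEv HX).
have hC t : (~` G `<=` Ev X (@NE _ _ _ k W theta t))%classic.
  move=> w /= nG; apply/forallP => i; rewrite ffunE; apply/negP => /eqbP h.
  by apply: nG; exists (nat_of_ord i).
have fC : P (~` G)%classic \is a fin_num := fin_num_measure P _ (measurableC mG).
set r := fine (P (~` G)%classic).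
have r0 : 0 <= r by apply: fine_ge0.
have rb t : r <= (1 - c) ^+ t * Stot k W theta q x0 0.
  have h1 : (P (~` G)%classic <= P (Ev X (@NE _ _ _ k W theta t)))%E.
    by apply: le_measure; rewrite ?inE; [apply: measurableC | apply: (mEv HX) | apply: hC].
  rewrite (PN k W theta HX) -(fineK fC) lee_fin -/r in h1.
  apply: le_trans h1 (le_trans (PN_le x0 Hq t) _).
  exact: (Stot_bound n0 HW Hq HX p0 p1 hp).
have : r <= 0.
  have hl0 : 0 <= 1 - c by lra.
  have hl1 : 1 - c < 1 by lra.
  exact: (@geo0 R _ _ _ hl0 hl1 r0 rb).
move=> rle.
have PC : P (~` G)%classic = 0%E.
  by rewrite -(fineK fC) -/r (@le_anti _ _ r 0) ?rle ?r0.
move: PC; rewrite probability_setC //.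
have fG : P G \is a fin_num := fin_num_measure P _ mG.
rewrite -(fineK fG) -EFinB => hE; have h := EFin_inj hE.
by rewrite -(fineK fG); congr EFin; lra.
Qed.
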